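(* Let $n\ge1$, $\theta_y=y\pi/n$ for $y=0,\dots,n-1$. The set of pairs $(\mathsf T_n,\mathsf W_n)$ attainable by LHS assemblages $\{\rho_{b|y}\}$ on $\mathbb C^2$ is exactly the convex polygon whose vertices are the $2(n+1)$ points (coinciding at $k=0$) $$\left(\frac kn,\ \pm\frac{\sin\left(\frac{\pi}{2}\frac kn\right)}{n\sin\left(\frac{\pi}{2n}\right)}\right),\qquad k=0,1,\dots,n,$$ and each of these points is an extreme point of the set.
   Context: An LHS assemblage on $\mathbb C^2$ with inputs $y\in\{0,\dots,n-1\}$ and outcomes $b\in\{0,1,\varnothing\}$ is $\rho_{b|y}=\sum_\lambda p(b|y,\lambda)\rho_\lambda$, where $\{\rho_\lambda\}$ is a finite family of positive semidefinite $2\times2$ matrices with $\sum_\lambda\mathrm{tr}\rho_\lambda=1$ and $p(b|y,\lambda)$ are conditional probabilities. With $Z,X$ the Pauli matrices, define $\mathsf W_n:=\frac1n\sum_{y=0}^{n-1}\mathrm{tr}\big[(\cos\theta_y Z+\sin\theta_y X)(\rho_{0|y}-\rho_{1|y})\big]$ and $\mathsf T_n:=\frac1n\sum_{y=0}^{n-1}\mathrm{tr}(\rho_{0|y}+\rho_{1|y})$. *)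

(* Defs.v *)
From HB Require Import structures.
From mathcomp Require Import all_boot all_order all_algebra.
From mathcomp Require Import all_classical all_reals all_analysis.
From mathcomp.real_closed Require Import complex.
Set Implicit Arguments. Unset Strict Implicit. Unset Printing Implicit Defensive.
Import Order.TTheory GRing.Theory Num.Theory.
Local Open Scope ring_scope.

Section Defs.
Variable R : realType.
Local Notation C := R[i].

Definition adjmx (p q : nat) (A : 'M[C]_(p, q)) : 'M[C]_(q, p) := (map_mx (fun z : C => conjc z) A)^T.

(** positive semidefinite 2x2 complex matrix: Hermitian and v^* A v >= 0 for all v
    (in R[i], [0 <= z] means z is real and nonnegative). *)
Definition psd (A : 'M[C]_2) : Prop :=
  adjmx A = A /\ forall v : 'cV[C]_2, 0 <= ((adjmx v) *m A *m v) ord0 ord0.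

Definition PauliZ : 'M[C]_2 := \matrix_(i < 2, j < 2)
  (if i == j then (if i == ord0 then 1 else -1) else 0).
Definition PauliX : 'M[C]_2 := \matrix_(i < 2, j < 2)
  (if i == j then 0 else 1).

(** Outcomes b ∈ {0, 1, ∅} are encoded as 'I_3 with 2 standing for ∅. *)
Definition out0 : 'I_3 := @Ordinal 3 0 isT.
Definition out1 : 'I_3 := @Ordinal 3 1 isT.

Definition LHS_model (n m : nat) (rho : 'I_m -> 'M[C]_2)
    (p : 'I_n -> 'I_3 -> 'I_m -> R) : Prop :=
  (forall l, psd (rho l)) /\
  \sum_(l < m) \tr (rho l) = 1 /\
  (forall y b l, 0 <= p y b l) /\
  (forall y l, \sum_(b < 3) p y b l = 1).

Definition assemblage (n m : nat) (rho : 'I_m -> 'M[C]_2)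
    (p : 'I_n -> 'I_3 -> 'I_m -> R) (y : 'I_n) (b : 'I_3) : 'M[C]_2 :=
  \sum_(l < m) (p y b l)%:C%C *: rho l.

Definition theta (n : nat) (y : 'I_n) : R := (y%:R * pi) / n%:R.

Definition obs (n : nat) (y : 'I_n) : 'M[C]_2 :=
  (cos (theta y))%:C%C *: PauliZ + (sin (theta y))%:C%C *: PauliX.

(** T_n and W_n (real parts of traces that are real for Hermitian assemblages) *)
Definition Tn (n : nat) (A : 'I_n -> 'I_3 -> 'M[C]_2) : R :=
  n%:R^-1 * \sum_(y < n) @complex.Re R (\tr (A y out0 + A y out1)).
Definition Wn (n : nat) (A : 'I_n -> 'I_3 -> 'M[C]_2) : R :=
  n%:R^-1 * \sum_(y < n) @complex.Re R (\tr (obs y *m (A y out0 - A y out1))).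

Definition attainable (n : nat) : set (R * R) :=
  [set tw | exists (m : nat) (rho : 'I_m -> 'M[C]_2) (p : 'I_n -> 'I_3 -> 'I_m -> R),
      LHS_model rho p /\ tw = (Tn (assemblage rho p), Wn (assemblage rho p))].

Definition vertex (n : nat) (k : 'I_n.+1) (s : bool) : R * R :=
  (k%:R / n%:R,
   (if s then 1 else -1) * sin (pi / 2 * (k%:R / n%:R)) / (n%:R * sin (pi / (2 * n%:R)))).

Definition polygon (n : nat) : set (R * R) :=
  [set x | exists w : 'I_n.+1 -> bool -> R,
      (forall k s, 0 <= w k s) /\
      \sum_(k < n.+1) \sum_(s : bool) w k s = 1 /\
      x = (\sum_(k < n.+1) \sum_(s : bool) w k s * (@vertex n k s).1,
           \sum_(k < n.+1) \sum_(s : bool) w k s * (@vertex n k s).2)].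

Definition extreme_point (S : set (R * R)) (x : R * R) : Prop :=
  S x /\ forall (u v : R * R) (t : R), S u -> S v -> 0 < t < 1 ->
    x = (t * u.1 + (1 - t) * v.1, t * u.2 + (1 - t) * v.2) -> u = x /\ v = x.

End Defs.

(* Main.v *)
Require Import Defs.
From HB Require Import structures.
From mathcomp Require Import all_boot all_order all_algebra.
From mathcomp Require Import all_classical all_reals all_analysis.
From mathcomp.real_closed Require Import complex.
From mathcomp Require Import ring lra zify.
Import Order.TTheory GRing.Theory Num.Theory.
Local Open Scope ring_scope.
Definition hs (R : realType) (n : nat) : R := pi / n%:R.
Definition Sv (R : realType) (n : nat) (j : nat) : R :=
  sin (j%:R * hs R n / 2) / sin (hs R n / 2).
Definition cv (R : realType) (n : nat) (j : nat) : R := Sv R n j.+1 - Sv R n j.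

Section Trig.
Variable R : realType.

Lemma sinPM (M d : R) : sin (M + d) - sin (M - d) = 2 * cos M * sin d.
Proof. rewrite sinD sinB; ring. Qed.

Lemma cos_le (x y : R) : 0 <= x -> x <= y -> y <= pi -> cos y <= cos x.
Proof.
move=> x0 xy ypi.
have Hx : x \in `[0, pi] by rewrite in_itv /= x0 (le_trans xy ypi).
have Hy : y \in `[0, pi] by rewrite in_itv /= ypi (le_trans x0 xy).
by rewrite leNgt (ltr_cos Hy Hx) -leNgt.
Qed.

Lemma cos_lt (x y : R) : 0 <= x -> x < y -> y <= pi -> cos y < cos x.
Proof.
move=> x0 xy ypi.
have Hx : x \in `[0, pi] by rewrite in_itv /= x0 (le_trans (ltW xy) ypi).
have Hy : y \in `[0, pi] by rewrite in_itv /= ypi (le_trans x0 (ltW xy)).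
by rewrite (ltr_cos Hx Hy).
Qed.

Variable n : nat.
Hypothesis hn : (0 < n)%N.
Local Notation h := (hs R n).
Local Notation S := (Sv R n).
Local Notation c := (cv R n).

Lemma nR_gt0 : 0 < n%:R :> R. Proof. by rewrite ltr0n. Qed.
Lemma nh : n%:R * h = pi.
Proof. rewrite /hs mulrC -mulrA mulVf ?mulr1 //; exact: lt0r_neq0 nR_gt0. Qed.
Lemma h_gt0 : 0 < h. Proof. by rewrite /hs divr_gt0 ?pi_gt0 ?nR_gt0. Qed.
Lemma h_le_pi : h <= pi.
Proof.
rewrite /hs ler_pdivrMr ?nR_gt0 // ler_peMr ?pi_ge0 //.
by rewrite ler1n.
Qed.
Lemma s0_gt0 : 0 < sin (h / 2).
Proof.
apply: sin_gt0_pi; have := h_gt0; have := h_le_pi; lra.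
Qed.
Lemma S0 : S 0 = 0. Proof. by rewrite /Sv mul0r mul0r sin0 mul0r. Qed.
Lemma S1 : S 1 = 1. Proof. by rewrite /Sv mul1r divff // lt0r_neq0 // s0_gt0. Qed.

Lemma SS2 j : S j.+2 = S j + 2 * cos (j.+1%:R * h / 2).
Proof.
have s0 := s0_gt0.
rewrite /Sv.
have E := sinPM (j.+1%:R * h / 2) (h / 2).
have -> : j.+2%:R * h / 2 = j.+1%:R * h / 2 + h / 2.
  rewrite -[j.+2]addn1 -[j.+1]addn1 !natrD; ring.
have E2 : j%:R * h / 2 = j.+1%:R * h / 2 - h / 2.
  rewrite -[j.+1]addn1 natrD; ring.
rewrite E2; apply: (@mulIf _ (sin (h/2))); first exact: lt0r_neq0.
rewrite mulrDl !divfK ?lt0r_neq0 //; lra.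
Qed.

Lemma cv_formula j : c j = 2 * cos ((j.*2.+1)%:R * h / 4) * sin (h / 4) / sin (h / 2).
Proof.
rewrite /cv /Sv -mulrBl.
rewrite (_ : j.+1%:R * h / 2 = (j.*2.+1)%:R * h / 4 + h / 4); last first.
  by rewrite -[j.*2.+1]addn1 -[j.+1]addn1 -muln2 !natrD natrM; field.
rewrite (_ : j%:R * h / 2 = (j.*2.+1)%:R * h / 4 - h / 4); last first.
  by rewrite -[j.*2.+1]addn1 -muln2 !natrD natrM; field.
by rewrite sinPM.
Qed.

Lemma sh4_gt0 : 0 < sin (h / 4).
Proof. apply: sin_gt0_pi; have := h_gt0; have := h_le_pi; lra. Qed.

Lemma arg_le j : (j < n)%N -> (j.*2.+1)%:R * h / 4 <= pi / 2.
Proof.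
move=> jn; have hp := h_gt0; have nhE := nh.
have : ((j.*2.+1)%:R <= (2 * n)%N%:R :> R) by rewrite ler_nat; lia.
rewrite natrM => H.
have : (j.*2.+1)%:R * h <= 2 * n%:R * h by rewrite ler_pM2r.
nra.
Qed.

Lemma cv_anti i j : (i <= j)%N -> (j < n)%N -> c j <= c i.
Proof.
move=> ij jn; rewrite !cv_formula.
have s0 := s0_gt0; have s4 := sh4_gt0; have hp := h_gt0.
rewrite ler_pM2r ?invr_gt0 // ler_pM2r // ler_pM2l //.
apply: cos_le.
- by apply: mulr_ge0 => //; apply: mulr_ge0 => //; apply: ltW.
- rewrite ler_pM2r // ler_pM2r // ler_nat; lia.
- have := arg_le j jn; have := pi_gt0 R; lra.
Qed.

Lemma cv_strict i j : (i < j)%N -> (j < n)%N -> c j < c i.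
Proof.
move=> ij jn; rewrite !cv_formula.
have s0 := s0_gt0; have s4 := sh4_gt0; have hp := h_gt0.
rewrite ltr_pM2r ?invr_gt0 // ltr_pM2r // ltr_pM2l //.
apply: cos_lt.
- by apply: mulr_ge0 => //; apply: mulr_ge0 => //; apply: ltW.
- rewrite ltr_pM2r // ltr_pM2r // ltr_nat; lia.
- have := arg_le j jn; have := pi_gt0 R; lra.
Qed.

Lemma Sv_ge0 j : (j <= n)%N -> 0 <= S j.
Proof.
move=> jn; rewrite /Sv; apply: divr_ge0; last exact: ltW s0_gt0.
apply: sin_ge0_pi; have hp := h_gt0; have nhE := nh.
have : (j%:R <= n%:R :> R) by rewrite ler_nat.
move=> H; have : j%:R * h <= n%:R * h by rewrite ler_pM2r.
have := pi_gt0 R. have : 0 <= j%:R :> R by []. nra.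
Qed.

Lemma Sconc j k : (j <= n)%N -> (k < n)%N -> S j - j%:R * c k <= S k - k%:R * c k.
Proof.
move=> jn kn.
have up : forall d, (k + d <= n)%N -> S (k + d) - (k + d)%:R * c k <= S k - k%:R * c k.
  elim=> [|d IH] H; first by rewrite addn0.
  apply: le_trans (IH _); last lia.
  have Hkd : (k + d < n)%N by lia.
  have := @cv_anti k (k + d) (leq_addr d k) Hkd.
  rewrite addnS /cv [_.+1%:R]mulrSr; lra.
have dn : forall d, (d <= k)%N -> S (k - d) - (k - d)%:R * c k <= S k - k%:R * c k.
  elim=> [|d IH] H; first by rewrite subn0.
  apply: le_trans (IH _); last lia.
  have Hkd : (k - d.+1 <= k)%N by lia.
  have := @cv_anti (k - d.+1) k Hkd kn.
  have -> : (k - d = (k - d.+1).+1)%N by lia.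
  rewrite /cv [_.+1%:R]mulrSr; lra.
case: (leqP k j) => kj.
  by have := up (j - k)%N; rewrite subnKC //; apply.
by have := dn (k - j)%N; rewrite subKn ?(ltnW kj) //; apply; lia.
Qed.
End Trig.
Section Trig2.
Variable R : realType.
Variable n : nat.
Hypothesis hn : (0 < n)%N.
Local Notation h := (hs R n).
Local Notation S := (Sv R n).
Local Notation c := (cv R n).

Lemma sum_cos k : \sum_(y < k) cos ((y%:R - (k%:R - 1) / 2) * h) = S k.
Proof.
have s0 := @s0_gt0 R n hn.
pose u (y : nat) := sin ((y%:R - (k%:R - 1) / 2) * h - h / 2).
have E : forall y : nat, cos ((y%:R - (k%:R - 1) / 2) * h) = (u y.+1 - u y) / (2 * sin (h / 2)).
  move=> y; rewrite /u.
  rewrite (_ : (y.+1%:R - (k%:R - 1) / 2) * h - h / 2 = (y%:R - (k%:R - 1) / 2) * h + h / 2); last first.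
    by rewrite mulrSr; field.
  rewrite sinPM; field; exact: lt0r_neq0.
rewrite (eq_bigr (fun y : 'I_k => (u y.+1 - u y) / (2 * sin (h / 2)))); last by move=> y _; exact: E.
rewrite -mulr_suml -(big_mkord xpredT (fun y => u y.+1 - u y)) telescope_sumr //.
rewrite /u /Sv.
rewrite (_ : (k%:R - (k%:R - 1) / 2) * h - h / 2 = k%:R * h / 2); last by field.
rewrite (_ : (0%:R - (k%:R - 1) / 2) * h - h / 2 = - (k%:R * h / 2)); last by field.
rewrite sinN; field; exact: lt0r_neq0.
Qed.

Lemma sin_shift (x : R) (m : nat) : `|sin (x + pi *+ m)| = `|sin x|.
Proof. by rewrite (alternatingn (@sinDpi R)) normrM normrX normrN1 expr1n mul1r. Qed.

End Trig2.
Section LemK.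
Variable R : realType.
Variable n : nat.
Hypothesis hn : (0 < n)%N.
Local Notation h := (hs R n).
Local Notation S := (Sv R n).

Lemma pair_bound (a b j : nat) (f : R) : (a <= b)%N -> (j.+1 <= b - a)%N -> (b < n)%N ->
  sin ((a%:R + f) * h) + sin ((b%:R + f) * h) <= 2 * cos (j.+1%:R * h / 2).
Proof.
move=> ab jba bn.
have hp := @h_gt0 R n hn; have nhE := @nh R n hn.
set M := ((a%:R + b%:R) / 2 + f) * h.
set d := (b%:R - a%:R) * h / 2.
have -> : (a%:R + f) * h = M - d by rewrite /M /d; field.
have -> : (b%:R + f) * h = M + d by rewrite /M /d; field.
have -> : sin (M - d) + sin (M + d) = 2 * sin M * cos d by rewrite sinB sinD; ring.
have bal : (b%:R - a%:R <= n%:R - 1 :> R).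
  have : (b - a <= n - 1)%N by lia.
  by rewrite -natrB // -(natrB _ hn) ler_nat.
have jal : (j.+1%:R <= b%:R - a%:R :> R) by rewrite -natrB // ler_nat.
have d0 : 0 <= d.
  rewrite /d; apply: mulr_ge0 => //; apply: mulr_ge0; last exact: ltW.
  by have := ler0n R j.+1; lra.
have dle : d <= pi / 2.
  rewrite /d; have : (b%:R - a%:R) * h <= (n%:R - 1) * h by rewrite ler_pM2r.
  nra.
have cd0 : 0 <= cos d by apply: cos_ge0_pihalf; have := pi_gt0 R; lra.
have cdl : cos d <= cos (j.+1%:R * h / 2).
  apply: cos_le.
  - by apply: mulr_ge0 => //; apply: mulr_ge0 => //; exact: ltW.
  - rewrite /d ler_pM2r // ler_pM2r //.
  - have := pi_gt0 R; lra.
have sM := sin_le1 M.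
nra.
Qed.

Lemma lemK (f : R) : 0 <= f -> f < 1 -> forall (B : {set 'I_n}),
  \sum_(N in B) sin ((N%:R + f) * h) <= S #|B|.
Proof.
move=> f0 f1.
suff main : forall m (B : {set 'I_n}), (#|B| <= m)%N ->
    \sum_(N in B) sin ((N%:R + f) * h) <= S #|B|.
  by move=> B; apply: (main #|B|).
elim=> [|m IH] B Bm.
  have B0 : #|B| = 0%N by lia.
  by rewrite (cards0_eq B0) big_set0 cards0 (@S0 R n).
case: (ltnP #|B| 2) => B2.
  case: (posnP #|B|) => Bp.
    by rewrite (cards0_eq Bp) big_set0 cards0 (@S0 R n).
  have /cards1P [x ->] : #|B| == 1%N by apply/eqP; lia.
  by rewrite big_set1 cards1 (@S1 R n hn) sin_le1.
have Bpos : (0 < #|B|)%N by lia.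
have [b bB bmax] := eq_bigmax_cond (fun i : 'I_n => val i) Bpos.
have [a aB amax] := eq_bigmax_cond (fun i : 'I_n => (n - val i)%N) Bpos.
have leb : forall i, i \in B -> (val i <= val b)%N.
  by move=> i iB; rewrite -bmax; apply: leq_bigmax_cond.
have gea : forall i, i \in B -> (val a <= val i)%N.
  move=> i iB; have := @leq_bigmax_cond _ (fun i => i \in B) (fun i : 'I_n => (n - val i)%N) i iB.
  rewrite amax /=; have := ltn_ord i; have := ltn_ord a; lia.
have spread : (#|B| <= b - a + 1)%N.
  rewrite cardE -(size_map val) -[(b - a + 1)%N](size_iota a).
  apply: uniq_leq_size; first by rewrite map_inj_uniq ?enum_uniq //; exact: val_inj.
  move=> x /mapP [i iB ->]; rewrite mem_enum in iB.
  rewrite mem_iota; have := leb i iB; have := gea i iB; rewrite /=; lia.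
have ab : a != b by apply/eqP => E; move: spread; rewrite E subnn; lia.
have bB' : b \in B :\ a by rewrite in_setD1 eq_sym ab.
rewrite (big_setD1 a) //= (big_setD1 b) //=.
have cB : #|B| = (#|B :\ a :\ b|).+2.
  by rewrite (cardsD1 a B) aB (cardsD1 b (B :\ a)) bB'.
have IH' := IH (B :\ a :\ b) ltac:(lia).
rewrite cB (@SS2 R n hn).
have := @pair_bound a b #|B :\ a :\ b| f (gea b bB) ltac:(lia) (ltn_ord b).
lra.
Qed.
End LemK.
Section Polar.
Variable R : realType.

Lemma polar (z x : R) : exists phi, 0 <= phi <= pi *+ 2 /\
  z = Num.sqrt (z ^+ 2 + x ^+ 2) * cos phi /\ x = Num.sqrt (z ^+ 2 + x ^+ 2) * sin phi.
Proof.
set r := Num.sqrt (z ^+ 2 + x ^+ 2).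
have r0 : 0 <= r by apply: sqrtr_ge0.
have r2 : r ^+ 2 = z ^+ 2 + x ^+ 2 by rewrite sqr_sqrtr // addr_ge0 // sqr_ge0.
have pi0 := pi_gt0 R.
case: (eqVneq r 0) => [rz|rnz].
  exists 0; rewrite rz !mul0r; split; first by rewrite lexx /=; lra.
  by split; apply/eqP; rewrite -sqrf_eq0; apply/eqP; move: r2; rewrite rz; nra.
have rp : 0 < r by rewrite lt_def rnz.
set u := z / r.
have u1 : -1 <= u <= 1.
  have : u ^+ 2 <= 1.
    by rewrite /u expr_div_n ler_pdivrMr ?exprn_gt0 // mul1r r2 lerDl sqr_ge0.
  move=> H; apply/andP; split; nra.
have zu : z = r * u by rewrite /u mulrC divfK // lt0r_neq0.
have s2 : 1 - u ^+ 2 = (x / r) ^+ 2.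
  rewrite /u !expr_div_n; apply: (@mulIf _ (r ^+ 2)); first by rewrite expf_neq0.
  by rewrite mulrBl !divfK ?expf_neq0 // mul1r r2; ring.
have sa : sin (acos u) = `|x| / r.
  by rewrite sin_acos // s2 sqrtr_sqr normrM normrV ?unitfE // (gtr0_norm rp).
case: (leP 0 x) => x0.
  exists (acos u); split.
    by rewrite acos_ge0 // (le_trans (acos_lepi u1)) //; lra.
  split; first by rewrite acosK // in_itv /=.
  by rewrite sa ger0_norm // mulrC divfK // lt0r_neq0.
exists (pi *+ 2 - acos u); split.
  have := acos_ge0 u1; have := acos_lepi u1; lra.
split.
  rewrite -[pi *+ 2 - acos u]addrC cosD2pi cosN acosK // in_itv /=.
rewrite -[pi *+ 2 - acos u]addrC sinD2pi sinN sa ltr0_norm //.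
rewrite mulrN mulrC divfK ?opprK // lt0r_neq0 //.
Qed.
End Polar.

Section LemL.
Variable R : realType.
Variable n : nat.
Hypothesis hn : (0 < n)%N.
Local Notation h := (hs R n).
Local Notation S := (Sv R n).

Lemma cosabs_sin (phi : R) : 0 <= phi <= pi *+ 2 ->
  exists (f : R) (sg : 'I_n -> 'I_n), [/\ 0 <= f, f < 1, injective sg &
    forall y : 'I_n, `|cos (y%:R * h - phi)| = sin (((sg y)%:R + f) * h)].
Proof.
move=> /andP [p0 p2].
have hp := @h_gt0 R n hn; have nhE := @nh R n hn; have np := @nR_gt0 R n hn.
set g := (pi / 2 - phi) / h + (2 * n)%N%:R.
have g0 : 0 <= g.
  rewrite /g natrM.
  have : (pi / 2 - phi) / h >= - (pi *+ 2) / h.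
    by rewrite ler_pM2r ?invr_gt0 //; have := pi_gt0 R; lra.
  rewrite mulNr (_ : pi *+ 2 / h = 2 * n%:R); first lra.
  by rewrite -nhE mulr2n; field; exact: lt0r_neq0.
set G := Num.trunc g.
set f := g - G%:R.
have f0 : 0 <= f by rewrite /f subr_ge0 truncn_le.
have f1 : f < 1 by rewrite /f; have := truncnS_gt g; rewrite -/G -natr1; lra.
exists f, (fun y => Ordinal (ltn_pmod (y + G) hn)); split => //.
  move=> y y' /(congr1 val) /= /eqP; rewrite eqn_modDr !modn_small //.
  by move=> /eqP E; apply: val_inj.
move=> y /=.
have E1 : (y%:R + g) * h = y%:R * h - phi + pi / 2 + pi *+ 2.
  rewrite /g natrM mulrDl mulrDl divfK ?lt0r_neq0 // -mulrA nhE; ring.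
have E2 : (y%:R + g) * h = (((y + G) %% n)%:R + f) * h + pi *+ ((y + G) %/ n).
  have E : y%:R = ((y + G) %/ n)%:R * n%:R + ((y + G) %% n)%:R - G%:R :> R.
    have := divn_eq (y + G) n => /(congr1 (fun k : nat => k%:R : R)).
    rewrite natrD natrD natrM; lra.
  rewrite /f -mulr_natr -nhE E; ring.
have := @sin_shift R ((((y + G) %% n)%:R + f) * h) ((y + G) %/ n).
rewrite -E2 E1 sin_shift sinDpihalf => ->.
apply: ger0_norm; apply: sin_ge0_pi; apply/andP; split.
  by apply: mulr_ge0 => //; [apply: addr_ge0 | apply: ltW].
rewrite -nhE ler_pM2r //.
have : (((y + G) %% n)%:R + 1 <= n%:R :> R) by rewrite natr1 ler_nat ltn_pmod.
lra.
Qed.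

Lemma lemL (t z x : R) : 0 <= t -> z ^+ 2 + x ^+ 2 <= t ^+ 2 -> forall J : {set 'I_n},
  \sum_(y in J) `|cos (y%:R * h) * z + sin (y%:R * h) * x| <= S #|J| * t.
Proof.
move=> t0 zx J.
have [phi [/cosabs_sin [f [sg [f0 f1 sginj Esg]]] [zE xE]]] := @polar R z x.
set r := Num.sqrt (z ^+ 2 + x ^+ 2).
have r0 : 0 <= r by apply: sqrtr_ge0.
have r2 : r ^+ 2 = z ^+ 2 + x ^+ 2 by rewrite sqr_sqrtr // addr_ge0 // sqr_ge0.
have rt : r <= t by nra.
rewrite -/r in zE xE; clearbody r.
have SJ : 0 <= S #|J| by apply: (@Sv_ge0 R n hn); rewrite -[n in (_ <= n)%N]card_ord max_card.
rewrite (eq_bigr (fun y : 'I_n => r * sin (((sg y)%:R + f) * h))); last first.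
  move=> y _; rewrite -Esg cosB zE xE.
  have -> : cos (y%:R * h) * (r * cos phi) + sin (y%:R * h) * (r * sin phi) =
    r * (cos (y%:R * h) * cos phi + sin (y%:R * h) * sin phi) by ring.
  by rewrite normrM (ger0_norm r0).
rewrite -mulr_sumr.
have : \sum_(i in J) sin (((sg i)%:R + f) * h) <= S #|J|.
  rewrite -(big_imset (fun N : 'I_n => sin ((N%:R + f) * h))); last by move=> ? ? _ _; apply: sginj.
  rewrite -(card_in_imset (f := sg)); last by move=> ? ? _ _; apply: sginj.
  exact: (@lemK R n hn f f0 f1).
nra.
Qed.
End LemL.
Section StateB.
Variable R : realType.
Variable n : nat.
Hypothesis hn : (0 < n)%N.
Local Notation h := (hs R n).
Local Notation S := (Sv R n).
Local Notation c := (cv R n).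

Lemma stateP (t z x : R) k : 0 <= t -> z ^+ 2 + x ^+ 2 <= t ^+ 2 -> (k < n)%N ->
  \sum_(y < n) Num.max 0 (`|cos (y%:R * h) * z + sin (y%:R * h) * x| - c k * t)
    <= (S k - k%:R * c k) * t.
Proof.
move=> t0 zx kn.
set J := [set y : 'I_n | c k * t < `|cos (y%:R * h) * z + sin (y%:R * h) * x|].
have -> : \sum_(y < n) Num.max 0 (`|cos (y%:R * h) * z + sin (y%:R * h) * x| - c k * t)
   = \sum_(y in J) (`|cos (y%:R * h) * z + sin (y%:R * h) * x| - c k * t).
  rewrite [RHS]big_mkcond /=; apply: eq_bigr => y _; rewrite inE.
  case: ltP => H.
    by rewrite max_r //; lra.
  by rewrite max_l //; lra.
rewrite sumrB sumr_const.
have HL := @lemL R n hn t z x t0 zx J.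
have HJ : (#|J| <= n)%N by rewrite -[n in (_ <= n)%N]card_ord max_card.
have HC := @Sconc R n hn #|J| k HJ kn.
have : (S #|J| - #|J|%:R * c k) * t <= (S k - k%:R * c k) * t by rewrite ler_wpM2r.
rewrite -mulr_natl.
nra.
Qed.

Lemma stateQ (t z x : R) (q d : 'I_n -> R) k : 0 <= t -> z ^+ 2 + x ^+ 2 <= t ^+ 2 -> (k < n)%N ->
  (forall y, 0 <= q y <= 1) -> (forall y, `|d y| <= q y) ->
  \sum_(y < n) d y * (cos (y%:R * h) * z + sin (y%:R * h) * x)
    <= c k * t * \sum_(y < n) q y + (S k - k%:R * c k) * t.
Proof.
move=> t0 zx kn hq hd.
have step : forall y : 'I_n, d y * (cos (y%:R * h) * z + sin (y%:R * h) * x) <=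
    c k * t * q y + Num.max 0 (`|cos (y%:R * h) * z + sin (y%:R * h) * x| - c k * t).
  move=> y; set a := cos _ * z + _.
  have h1 : d y * a <= q y * `|a|.
    apply: le_trans (ler_norm _) _; rewrite normrM ler_wpM2r //.
  have := hq y => /andP [q0 q1].
  have a0 : 0 <= `|a| by [].
  case: (leP 0 (`|a| - c k * t)) => H; nra.
apply: le_trans (ler_sum _ (fun y _ => step y)) _.
rewrite big_split /= -mulr_sumr lerD2l.
exact: stateP.
Qed.
End StateB.
Section Mat.
Variable R : realType.
Local Notation C := R[i].

Lemma ReRM (r : R) (w : C) : complex.Re (r%:C%C * w) = r * complex.Re w.
Proof. by case: w => a b /=; ring. Qed.

Lemma w0 (i : 'I_1) : widen_ord (leqnSn 1) i = ord0 :> 'I_2. Proof. by rewrite (ord1 i); apply: val_inj. Qed.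

Lemma tr2 (M : 'M[C]_2) : \tr M = M ord0 ord0 + M ord_max ord_max.
Proof. by rewrite /mxtrace big_ord_recr big_ord1 /= w0. Qed.

Lemma Re_tr_obs n (y : 'I_n) (M : 'M[C]_2) : complex.Re (\tr (obs R y *m M)) =
  cos (theta R y) * (complex.Re (M ord0 ord0) - complex.Re (M ord_max ord_max))
  + sin (theta R y) * (complex.Re (M ord0 ord_max) + complex.Re (M ord_max ord0)).
Proof.
rewrite tr2 !mxE big_ord_recr big_ord1 /= big_ord_recr big_ord1 /= !mxE /= !w0 /=.
set a := M ord0 ord0; set b := M ord0 ord_max; set d := M ord_max ord0; set e := M ord_max ord_max.
case: a => ? ?; case: b => ? ?; case: d => ? ?; case: e => ? ? /=.
ring.
Qed.

End Mat.
Section Mat2.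
Variable R : realType.
Local Notation C := R[i].
Local Notation Re := (@complex.Re R).

Lemma psd_quad (M : 'M[C]_2) : psd M -> forall s u : R,
  0 <= s ^+ 2 * Re (M ord0 ord0) + s * u * (Re (M ord0 ord_max) + Re (M ord_max ord0))
       + u ^+ 2 * Re (M ord_max ord_max).
Proof.
move=> [_ H] s u.
pose v : 'cV[C]_2 := \matrix_(i < 2, j < 1) (if i == ord0 then s%:C%C else u%:C%C).
have := H v; rewrite lecE => /andP [_].
rewrite !mxE big_ord_recr big_ord1 /= !mxE big_ord_recr big_ord1 /= !mxE.
rewrite big_ord_recr big_ord1 /= !mxE /= !w0 /=.
set a := M ord0 ord0; set b := M ord0 ord_max; set d := M ord_max ord0; set e := M ord_max ord_max.
case: a => ? ?; case: b => ? ?; case: d => ? ?; case: e => ? ? /=.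
move=> Hle; apply: le_trans Hle _; rewrite le_eqVlt; apply/orP; left; apply/eqP; ring.
Qed.

Lemma psd_bloch (M : 'M[C]_2) : psd M ->
  let A := Re (M ord0 ord0) in let D := Re (M ord_max ord_max) in
  let B := Re (M ord0 ord_max) + Re (M ord_max ord0) in
  0 <= A + D /\ (A - D) ^+ 2 + B ^+ 2 <= (A + D) ^+ 2.
Proof.
move=> /psd_quad Q A D B.
have H1 := Q 1 0; have H2 := Q 0 1; have H3 := Q B (- 2 * A); have H4 := Q (2 * D) (- B).
have H5 := Q 1 1; have H6 := Q 1 (-1).
rewrite -/A -/D -/B in H1 H2 H3 H4 H5 H6.
have HA : 0 <= A by lra.
have HD : 0 <= D by lra.
have HX : 0 <= 4 * A * D - B ^+ 2.
  case: (ltrgtP A 0) => [An|Ap|A0]; first lra.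
    nra.
  case: (ltrgtP D 0) => [Dn|Dp|D0]; first lra.
    nra.
  have B0 : B = 0 by move: H5 H6; rewrite A0 D0; lra.
  by rewrite A0 D0 B0; lra.
split; first lra.
nra.
Qed.
End Mat2.
Section Expand.
Variable R : realType.
Local Notation C := R[i].
Local Notation Re := (@complex.Re R).
Lemma ReD (x y : C) : Re (x + y) = Re x + Re y. Proof. by case: x; case: y. Qed.
Lemma Re_sum (I : finType) (F : I -> C) : Re (\sum_i F i) = \sum_i Re (F i).
Proof. exact: (big_morph _ ReD (erefl : Re 0 = 0)). Qed.

Variables (n m : nat) (rho : 'I_m -> 'M[C]_2) (p : 'I_n -> 'I_3 -> 'I_m -> R).

Lemma Tn_expand : Tn (assemblage rho p) =
  n%:R^-1 * \sum_(y < n) \sum_(l < m) (p y out0 l + p y out1 l) * Re (\tr (rho l)).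
Proof.
rewrite /Tn; congr (_ * _); apply: eq_bigr => y _.
rewrite /assemblage -big_split /= [X in complex.Re X]linear_sum Re_sum; apply: eq_bigr => l _.
by rewrite -scalerDl linearZ /= -rmorphD ReRM.
Qed.

Lemma Wn_expand : Wn (assemblage rho p) =
  n%:R^-1 * \sum_(y < n) \sum_(l < m) (p y out0 l - p y out1 l) * Re (\tr (obs R y *m rho l)).
Proof.
rewrite /Wn; congr (_ * _); apply: eq_bigr => y _.
rewrite /assemblage -sumrB mulmx_sumr [X in complex.Re X]linear_sum Re_sum; apply: eq_bigr => l _.
by rewrite -scalerBl -scalemxAr linearZ /= -rmorphB ReRM.
Qed.
End Expand.
Definition region (R : realType) (n : nat) : set (R * R) :=
  [set tw | (0 <= tw.1 <= 1) /\ forall k, (k < n)%N ->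
     `|tw.2| * n%:R <= Sv R n k + cv R n k * (n%:R * tw.1 - k%:R)].

Section PartA.
Variable R : realType.
Variable n : nat.
Hypothesis hn : (0 < n)%N.
Local Notation h := (hs R n).
Local Notation S := (Sv R n).
Local Notation c := (cv R n).
Local Notation Re := (@complex.Re R).

Lemma theta_h (y : 'I_n) : theta R y = y%:R * h.
Proof. by rewrite /theta /hs mulrA. Qed.

Lemma att_region tw : @attainable R n tw -> region R n tw.
Proof.
move=> [m [rho [p [[hpsd [htr [hp0 hp1]]] ->]]]].
pose A l := Re (rho l ord0 ord0).
pose D l := Re (rho l ord_max ord_max).
pose B l := Re (rho l ord0 ord_max) + Re (rho l ord_max ord0).
have trE : forall l, Re (\tr (rho l)) = A l + D l by move=> l; rewrite tr2 ReD.
have obsE : forall (y : 'I_n) (l : 'I_m), Re (\tr (obs R y *m rho l)) =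
    cos (y%:R * h) * (A l - D l) + sin (y%:R * h) * B l.
  by move=> y l; rewrite Re_tr_obs theta_h.
have tsum : \sum_(l < m) (A l + D l) = 1.
  have := congr1 Re htr; rewrite Re_sum /= => <-; apply: eq_bigr => l _; by rewrite trE.
have bloch : forall l, 0 <= A l + D l /\ (A l - D l) ^+ 2 + B l ^+ 2 <= (A l + D l) ^+ 2.
  move=> l; have H := @psd_bloch R _ (hpsd l); simpl in H; exact H.
have pq : forall y l, 0 <= p y out0 l + p y out1 l <= 1.
  move=> y l; apply/andP; split; first by apply: addr_ge0.
  have := hp1 y l; rewrite (bigD1 out0) //= (bigD1 out1) //=.
  have : 0 <= \sum_(i < 3 | (i != out0) && (i != out1)) p y i l by apply: sumr_ge0.
  lra.
have pd : forall y l, `|p y out0 l - p y out1 l| <= p y out0 l + p y out1 l.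
  move=> y l; have := hp0 y out0 l; have := hp0 y out1 l.
  rewrite ler_norml; move=> ? ?; apply/andP; split; lra.
have np := @nR_gt0 R n hn.
rewrite Tn_expand Wn_expand /region /=.
under eq_bigr do under eq_bigr do rewrite trE.
under [X in `|_ * X|]eq_bigr do under eq_bigr do rewrite obsE.
set Y := \sum_(y < n) _.
set X := \sum_(y < n) _.
have Yn : Y <= n%:R.
  rewrite /Y -[n in n%:R]card_ord -sumr_const; apply: ler_sum => y _.
  rewrite -tsum; apply: ler_sum => l _.
  have := pq y l; have := (bloch l).1; move=> ? /andP [? ?]; nra.
have Y0 : 0 <= Y.
  apply: sumr_ge0 => y _; apply: sumr_ge0 => l _.
  have := pq y l; have := (bloch l).1; move=> ? /andP [? ?]; nra.
split.
  apply/andP; split; first by apply: mulr_ge0 => //; rewrite invr_ge0 ler0n.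
  by rewrite ler_pdivrMl // mulr1.
move=> k kn.
rewrite normrM ger0_norm ?invr_ge0 ?ler0n // mulrAC mulVf ?lt0r_neq0 // mul1r.
rewrite mulrA mulfV ?lt0r_neq0 // mul1r.
have key : forall e : R, e ^+ 2 = 1 -> e * X <= S k + c k * (Y - k%:R).
  move=> e e2.
  have -> : e * X = \sum_(l < m) \sum_(y < n) (e * (p y out0 l - p y out1 l)) *
      (cos (y%:R * h) * (A l - D l) + sin (y%:R * h) * B l).
    rewrite /X mulr_sumr exchange_big /=; apply: eq_bigr => l _.
    rewrite mulr_sumr; apply: eq_bigr => y _; ring.
  have -> : Y = \sum_(l < m) (A l + D l) * \sum_(y < n) (p y out0 l + p y out1 l).
    rewrite /Y exchange_big /=; apply: eq_bigr => l _.
    rewrite mulr_sumr; apply: eq_bigr => y _; ring.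
  have step : forall l : 'I_m, \sum_(y < n) (e * (p y out0 l - p y out1 l)) *
      (cos (y%:R * h) * (A l - D l) + sin (y%:R * h) * B l) <=
      c k * (A l + D l) * \sum_(y < n) (p y out0 l + p y out1 l) + (S k - k%:R * c k) * (A l + D l).
    move=> l; have [t0 zx] := bloch l.
    apply: (@stateQ R n hn (A l + D l) (A l - D l) (B l)
              (fun y => p y out0 l + p y out1 l) (fun y => e * (p y out0 l - p y out1 l)) k t0 zx kn).
      by move=> y; exact: pq.
    move=> y; rewrite normrM (_ : `|e| = 1) ?mul1r //.
    by apply/eqP; rewrite -(@eqrXn2 _ 2) // ?normr_ge0 // real_normK ?num_real // e2 expr1n.
  apply: le_trans (ler_sum _ (fun l _ => step l)) _.
  rewrite big_split /=.
  have E2 : \sum_(i < m) (S k - k%:R * c k) * (A i + D i) = S k - k%:R * c k.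
    by rewrite -mulr_sumr tsum mulr1.
  have E1 : \sum_(i < m) c k * (A i + D i) * \sum_(y < n) (p y out0 i + p y out1 i) =
    c k * \sum_(l < m) (A l + D l) * \sum_(y < n) (p y out0 l + p y out1 l).
    by rewrite mulr_sumr; apply: eq_bigr => l _; ring.
  rewrite E1 E2.
  lra.
have K1 := key 1 (expr1n _ _); have K2 := key (-1) ltac:(by rewrite sqrrN expr1n).
rewrite ler_norml; apply/andP; split; lra.
Qed.
End PartA.
Section PartB.
Variable R : realType.
Variable n : nat.
Hypothesis hn : (0 < n)%N.
Local Notation h := (hs R n).
Local Notation S := (Sv R n).
Local Notation c := (cv R n).

Lemma sum_delta m a (F : nat -> R) : (a < m)%N ->
  \sum_(i < m) (if (i == a :> nat) then F i else 0) = F a.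
Proof.
move=> am; rewrite (bigD1 (Ordinal am)) //= eqxx big1 ?addr0 // => i.
by rewrite -val_eqE /= => /negbTE ->.
Qed.

Lemma vertex1 (k : 'I_n.+1) s : (vertex R k s).1 = k%:R / n%:R.
Proof. by []. Qed.

Lemma vertex2 (k : 'I_n.+1) s : (vertex R k s).2 = (if s then 1 else -1) * S k / n%:R.
Proof.
have s0 := @s0_gt0 R n hn; have np := @nR_gt0 R n hn.
rewrite /vertex /= /Sv /hs.
rewrite (_ : pi / 2 * (k%:R / n%:R) = k%:R * (pi / n%:R) / 2); last by field; exact: lt0r_neq0.
rewrite (_ : pi / (2 * n%:R) = pi / n%:R / 2); last by field; exact: lt0r_neq0.
rewrite /hs in s0.
field; rewrite ?lt0r_neq0 //.
Qed.

Lemma region_poly tw : region R n tw -> polygon n tw.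
Proof.
case: tw => T W [/andP [T0 T1] H] /=.
have np := @nR_gt0 R n hn.
have [k [kn kT Tk]] : exists k : nat, [/\ (k < n)%N, k%:R <= n%:R * T & n%:R * T <= k.+1%:R].
  case: (ltP (n%:R * T) n%:R) => nT.
    exists (Num.trunc (n%:R * T)); split.
    - by rewrite truncn_lt_nat // mulr_ge0 // ler0n.
    - by rewrite truncn_le mulr_ge0 // ler0n.
    - exact: ltW (truncnS_gt _).
  exists n.-1; split; first by rewrite prednK // leqnn.
  - by rewrite (le_trans _ nT) // ler_nat leq_pred.
  - by rewrite prednK // -[X in _ <= X]mulr1 ler_wpM2l // ler0n.
set be := n%:R * T - k%:R.
set al := 1 - be.
have be0 : 0 <= be by rewrite /be subr_ge0.
have be1 : be <= 1 by rewrite /be; move: Tk; rewrite -natr1; lra.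
set L := (S k + c k * be) / n%:R.
have WL : `|W| <= L by rewrite /L ler_pdivlMr //; exact: H.
have L0 : 0 <= L by apply: le_trans WL.
set sg := if L == 0 then 1 / 2 else (L + W) / (2 * L).
have sg01 : 0 <= sg <= 1.
  rewrite /sg; case: eqP => L0'; first by apply/andP; split; lra.
  have Lp : 0 < L by rewrite lt_def L0 andbT; apply/eqP.
  move: WL; rewrite ler_norml => /andP [W1 W2].
  by apply/andP; split; [apply: divr_ge0; lra | rewrite ler_pdivrMr; lra].
have sgW : (2 * sg - 1) * L = W.
  rewrite /sg; case: eqP => L0'.
    by move: WL; rewrite L0' normr_le0 => /eqP ->; rewrite mulr0.
  by field; apply/eqP => E; apply: L0'; lra.
pose w (k' : 'I_n.+1) (s : bool) : R :=
  ((if (k' == k :> nat) then al else 0) + (if (k' == k.+1 :> nat) then be else 0)) *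
  (if s then sg else 1 - sg).
have kk : (k < n.+1)%N by lia.
have kk1 : (k.+1 < n.+1)%N by lia.
have sumw : forall G : nat -> R,
  \sum_(k' < n.+1) ((if (k' == k :> nat) then al else 0) + (if (k' == k.+1 :> nat) then be else 0)) * G k'
   = al * G k + be * G k.+1.
  move=> G; rewrite (eq_bigr (fun k' : 'I_n.+1 => (if (k' == k :> nat) then al * G k' else 0)
     + (if (k' == k.+1 :> nat) then be * G k' else 0))); last first.
    by move=> i _; rewrite mulrDl; case: eqP; case: eqP => _ _; rewrite ?mul0r.
  by rewrite big_split /= (@sum_delta _ _ (fun i => al * G i)) // (@sum_delta _ _ (fun i => be * G i)).
exists w; split.
  move=> k' s; rewrite /w; apply: mulr_ge0.
    by apply: addr_ge0; case: eqP => _ //; rewrite /al; lra.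
  by case: s; lra.
split.
  rewrite (eq_bigr (fun k' : 'I_n.+1 =>
     ((if (k' == k :> nat) then al else 0) + (if (k' == k.+1 :> nat) then be else 0)) * 1)).
    by rewrite (sumw (fun _ => 1)) /al; lra.
  by move=> i _; rewrite big_bool /w /=; ring.
congr (_, _).
  rewrite (eq_bigr (fun k' : 'I_n.+1 =>
     ((if (k' == k :> nat) then al else 0) + (if (k' == k.+1 :> nat) then be else 0)) * (k'%:R / n%:R))).
    rewrite (sumw (fun i => i%:R / n%:R)) /al /be -natr1; field; exact: lt0r_neq0.
  by move=> i _; rewrite big_bool /w !vertex1 /=; ring.
rewrite (eq_bigr (fun k' : 'I_n.+1 =>
   ((if (k' == k :> nat) then al else 0) + (if (k' == k.+1 :> nat) then be else 0)) *
   ((2 * sg - 1) * S k' / n%:R))).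
  rewrite (sumw (fun i => (2 * sg - 1) * S i / n%:R)) -sgW /L /al /cv; field; exact: lt0r_neq0.
by move=> i _; rewrite big_bool /w !vertex2 /=; ring.
Qed.
End PartB.
Section PartC.
Variable R : realType.
Variable n : nat.
Hypothesis hn : (0 < n)%N.
Local Notation h := (hs R n).
Local Notation S := (Sv R n).
Local Notation C := R[i].
Local Notation Re := (@complex.Re R).

Definition kk (l : 'I_(n.+1 + n.+1)) : 'I_n.+1 :=
  match fintype.split l with inl k => k | inr k => k end.
Definition ss (l : 'I_(n.+1 + n.+1)) : bool :=
  match fintype.split l with inl _ => true | inr _ => false end.

Lemma kk_l k : kk (lshift n.+1 k) = k.
Proof. by rewrite /kk (unsplitK (inl k : 'I_n.+1 + 'I_n.+1)). Qed.
Lemma kk_r k : kk (rshift n.+1 k) = k.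
Proof. by rewrite /kk (unsplitK (inr k : 'I_n.+1 + 'I_n.+1)). Qed.
Lemma ss_l k : ss (lshift n.+1 k) = true.
Proof. by rewrite /ss (unsplitK (inl k : 'I_n.+1 + 'I_n.+1)). Qed.
Lemma ss_r k : ss (rshift n.+1 k) = false.
Proof. by rewrite /ss (unsplitK (inr k : 'I_n.+1 + 'I_n.+1)). Qed.

Lemma sum_kk (F : 'I_n.+1 -> bool -> R) :
  \sum_(l < n.+1 + n.+1) F (kk l) (ss l) = \sum_(k < n.+1) \sum_(s : bool) F k s.
Proof.
rewrite big_split_ord /=.
under eq_bigr do rewrite kk_l ss_l.
under [X in _ + X]eq_bigr do rewrite kk_r ss_r.
by rewrite -big_split /=; apply: eq_bigr => k _; rewrite big_bool.
Qed.

Definition phk (k : nat) : R := (k%:R - 1) / 2 * h.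
Definition uu (k : nat) (i : 'I_2) : R :=
  if i == ord0 then cos (phk k / 2) else sin (phk k / 2).

Definition rhoC (w : 'I_n.+1 -> bool -> R) (l : 'I_(n.+1 + n.+1)) : 'M[C]_2 :=
  \matrix_(i < 2, j < 2) (w (kk l) (ss l) * uu (kk l) i * uu (kk l) j)%:C%C.

Definition pC (y : 'I_n) (b : 'I_3) (l : 'I_(n.+1 + n.+1)) : R :=
  if (y < kk l)%N then (if b == (if ss l then out0 else out1) then 1 else 0)
  else (if b == ord_max then 1 else 0).

Lemma sum_ind (I : finType) (t : I) : \sum_(b : I) (if b == t then 1 else 0 : R) = 1.
Proof. by rewrite (bigD1 t) //= eqxx big1 ?addr0 // => i /negbTE ->. Qed.

Lemma rcM (x y : R) : (x * y)%:C%C = x%:C%C * y%:C%C.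
Proof. exact: rmorphM. Qed.
Lemma cjD (x y : C) : (x + y)^*%C = x^*%C + y^*%C.
Proof. exact: rmorphD. Qed.
Lemma cjM (x y : C) : (x * y)^*%C = x^*%C * y^*%C.
Proof. exact: rmorphM. Qed.

Lemma psd_rank1 (a : R) (u0 u1 : R) : 0 <= a ->
  psd (\matrix_(i < 2, j < 2) (a * (if i == ord0 then u0 else u1) * (if j == ord0 then u0 else u1))%:C%C).
Proof.
move=> a0; split.
  rewrite /adjmx; apply/matrixP => i j; rewrite !mxE conjc_real; congr (_%:C%C); ring.
move=> v.
set S0 := (u0%:C%C * v ord0 ord0 + u1%:C%C * v ord_max ord0).
have -> : (adjmx v *m (\matrix_(i < 2, j < 2) (a * (if i == ord0 then u0 else u1) * (if j == ord0 then u0 else u1))%:C%C) *m v) ord0 ord0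
   = a%:C%C * (S0 * S0^*%C).
  rewrite !mxE big_ord_recr big_ord1 /= !mxE big_ord_recr big_ord1 /= !mxE.
  rewrite big_ord_recr big_ord1 /= !mxE /= !w0 /=.
  rewrite /S0 cjD !cjM !conjc_real !rcM.
  ring.
by apply: mulr_ge0; [rewrite ler0c | exact: mulcJ_ge0].
Qed.

Lemma model_ok (w : 'I_n.+1 -> bool -> R) : (forall k s, 0 <= w k s) ->
  \sum_(k < n.+1) \sum_(s : bool) w k s = 1 -> LHS_model (rhoC w) pC.
Proof.
move=> w0' w1; split.
  move=> l.
  have -> : rhoC w l = \matrix_(i < 2, j < 2) (w (kk l) (ss l) *
      (if i == ord0 then cos (phk (kk l) / 2) else sin (phk (kk l) / 2)) *
      (if j == ord0 then cos (phk (kk l) / 2) else sin (phk (kk l) / 2)))%:C%C.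
    by apply/matrixP => i j; rewrite !mxE.
  exact: psd_rank1.
split.
  have E : forall l, \tr (rhoC w l) = (w (kk l) (ss l))%:C%C.
    move=> l; rewrite tr2 !mxE /uu /= -rmorphD /=; congr (_%:C%C).
    rewrite -mulrA -mulrA -mulrDr; have := cos2Dsin2 (phk (kk l) / 2); rewrite !expr2 => ->.
    by rewrite mulr1.
  under eq_bigr do rewrite E.
  rewrite -rmorph_sum /= (sum_kk (fun k s => w k s)) w1 //.
split.
  move=> y b l; rewrite /pC; case: ifP => _; case: ifP => _ //; lra.
move=> y l; rewrite /pC; case: (y < kk l)%N; case: (ss l); by rewrite /= sum_ind.
Qed.
End PartC.
Section PartC2.
Variable R : realType.
Variable n : nat.
Hypothesis hn : (0 < n)%N.
Local Notation h := (hs R n).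
Local Notation S := (Sv R n).
Local Notation C := R[i].
Local Notation Re := (@complex.Re R).

Local Notation kk := (kk n).
Local Notation ss := (ss n).
Local Notation pC := (@pC R n).

Lemma sum_lt (k : nat) (f : nat -> R) : (k <= n)%N ->
  \sum_(y < n) (if (y < k)%N then f y else 0) = \sum_(y < k) f y.
Proof. by move=> kn; rewrite (big_ord_widen n f kn) [RHS]big_mkcond. Qed.

Variable w : 'I_n.+1 -> bool -> R.

Lemma trC l : Re (\tr (@rhoC R n w l)) = w (kk l) (ss l).
Proof.
rewrite tr2 !mxE /uu /=.
rewrite -mulrA -mulrA -mulrDr; have := cos2Dsin2 (phk R n (kk l) / 2); rewrite !expr2 => ->.
by rewrite mulr1.
Qed.

Lemma obsC (y : 'I_n) l : Re (\tr (obs R y *m @rhoC R n w l)) =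
  w (kk l) (ss l) * cos ((y%:R - ((kk l)%:R - 1) / 2) * h).
Proof.
rewrite Re_tr_obs theta_h !mxE /uu /=.
set a := phk R n (kk l) / 2.
have -> : (y%:R - ((kk l)%:R - 1) / 2) * h = y%:R * h - a *+ 2.
  by rewrite /a /phk mulr2n; field.
rewrite cosB cos_mulr2n sin_mulr2n.
have := cos2Dsin2 a; rewrite !expr2 => E.
rewrite !mulr2n -E; ring.
Qed.

Lemma pC01 (y : 'I_n) l : pC y out0 l + pC y out1 l = if (y < kk l)%N then 1 else 0.
Proof. by rewrite /pC; case: (y < kk l)%N; case: (ss l) => /=; lra. Qed.

Lemma pCd (y : 'I_n) l : pC y out0 l - pC y out1 l =
  if (y < kk l)%N then (if ss l then 1 else -1) else 0.
Proof. by rewrite /pC; case: (y < kk l)%N; case: (ss l) => /=; lra. Qed.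

Lemma TnC : Tn (assemblage (@rhoC R n w) pC) =
  \sum_(k < n.+1) \sum_(s : bool) w k s * (vertex R k s).1.
Proof.
have np := @nR_gt0 R n hn.
rewrite Tn_expand.
under eq_bigr do under eq_bigr do rewrite pC01 trC.
rewrite exchange_big /=.
under eq_bigr => l _.
  rewrite (eq_bigr (fun y : 'I_n => (if (y < kk l)%N then w (kk l) (ss l) else 0))); last first.
    by move=> y _; case: ifP; rewrite ?mul1r ?mul0r.
  rewrite (@sum_lt (kk l) (fun _ => w (kk l) (ss l))) ?sumr_const ?card_ord; last by rewrite -ltnS.
  over.
rewrite mulr_sumr (@sum_kk R n (fun k s => n%:R^-1 * (w k s *+ k))).
by apply: eq_bigr => k _; apply: eq_bigr => s _; rewrite -mulr_natr; field; exact: lt0r_neq0.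
Qed.

Lemma WnC : Wn (assemblage (@rhoC R n w) pC) =
  \sum_(k < n.+1) \sum_(s : bool) w k s * (vertex R k s).2.
Proof.
have np := @nR_gt0 R n hn.
rewrite Wn_expand.
under eq_bigr do under eq_bigr do rewrite pCd obsC.
rewrite exchange_big /=.
under eq_bigr => l _.
  rewrite (eq_bigr (fun y : 'I_n => (if (y < kk l)%N then
      (if ss l then 1 else -1) * w (kk l) (ss l) * cos ((y%:R - ((kk l)%:R - 1) / 2) * h) else 0))); last first.
    by move=> y _; case: ifP => _; rewrite ?mul0r // mulrA.
  rewrite (@sum_lt (kk l) (fun y => (if ss l then 1 else -1) * w (kk l) (ss l) *
       cos ((y%:R - ((kk l)%:R - 1) / 2) * h))); last by rewrite -ltnS.
  rewrite -mulr_sumr (@sum_cos R n hn).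
  over.
rewrite mulr_sumr (@sum_kk R n (fun k s => n%:R^-1 * ((if s then 1 else -1) * w k s * S k))).
apply: eq_bigr => k _; apply: eq_bigr => s _; have E := @vertex2 R n hn k s; simpl in E; rewrite E.
by clear E; case: s; field; exact: lt0r_neq0.
Qed.

End PartC2.
Section PartD.
Variable R : realType.
Variable n : nat.
Hypothesis hn : (0 < n)%N.
Local Notation h := (hs R n).
Local Notation S := (Sv R n).
Local Notation c := (cv R n).

Lemma poly_att tw : polygon n tw -> @attainable R n tw.
Proof.
move=> [w [w0 [w1 ->]]].
exists (n.+1 + n.+1)%N, (@rhoC R n w), (@pC R n); split; first exact: model_ok.
by rewrite (@TnC R n hn) (@WnC R n hn).
Qed.

Lemma att_eq : @attainable R n = @polygon R n.
Proof.
apply: funext => tw; apply: propext; split.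
  by move=> /(@att_region R n hn) /(@region_poly R n hn).
exact: poly_att.
Qed.

Lemma vertex_att (k : 'I_n.+1) (s : bool) : @attainable R n (vertex R k s).
Proof.
apply: poly_att.
exists (fun k' s' => if (k' == k) && (s' == s) then 1 else 0); split.
  by move=> k' s'; case: ifP.
have key : forall F : 'I_n.+1 -> bool -> R,
    \sum_(k' < n.+1) \sum_(s' : bool) (if (k' == k) && (s' == s) then 1 else 0) * F k' s' = F k s.
  move=> F; rewrite (bigD1 k) //= [X in _ + X]big1 ?addr0.
    rewrite big_bool eqxx /=; case: s => /=; ring.
  move=> i /negbTE ik; rewrite big_bool ik /=; ring.
split.
  have := key (fun _ _ => 1); rewrite /= => E; apply: (etrans _ E).
  by apply: eq_bigr => i _; apply: eq_bigr => j _; rewrite mulr1.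
by rewrite !key; case: (vertex R k s).
Qed.

Lemma extreme_aux (t a b A B : R) : 0 < t -> t < 1 -> a <= A -> b <= B ->
  t * a + (1 - t) * b = t * A + (1 - t) * B -> a = A /\ b = B.
Proof. move=> t0 t1 aA bB E; split; nra. Qed.

Lemma aff (t a b Sx cx x0 K : R) : t * a + (1 - t) * b = K ->
  t * (Sx + cx * (a - x0)) + (1 - t) * (Sx + cx * (b - x0)) = Sx + cx * (K - x0).
Proof. by move=> E; rewrite -E; ring. Qed.

Lemma extreme_vertex (k : 'I_n.+1) (s : bool) : extreme_point (@attainable R n) (vertex R k s).
Proof.
split; first exact: vertex_att.
move=> [u1 u2] [v1 v2] t /(@att_region R n hn) [/andP [u10 u11] Hu]
  /(@att_region R n hn) [/andP [v10 v11] Hv] /andP [t0 t1] /=.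
rewrite /= in u10 u11 v10 v11 Hu Hv.
have np := @nR_gt0 R n hn.
set e : R := if s then 1 else -1.
have VE : vertex R k s = (k%:R / n%:R, e * S k / n%:R).
  by apply: injective_projections; [exact: vertex1 | exact: (@vertex2 R n hn)].
rewrite VE => -[E1 E2].
have e2 : e * e = 1 by rewrite /e; case: ifP => _; ring.
have eabs : forall x : R, e * x <= `|x|.
  by move=> x; rewrite /e; case: ifP => _; rewrite ?mul1r ?mulN1r ?ler_norm // -normrN ler_norm.
clearbody e.
have eu : forall j, (j < n)%N -> e * u2 * n%:R <= S j + c j * (n%:R * u1 - j%:R).
  by move=> j jn; apply: le_trans (Hu j jn); rewrite ler_pM2r // eabs.
have ev : forall j, (j < n)%N -> e * v2 * n%:R <= S j + c j * (n%:R * v1 - j%:R).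
  by move=> j jn; apply: le_trans (Hv j jn); rewrite ler_pM2r // eabs.
have E2' : t * (e * u2 * n%:R) + (1 - t) * (e * v2 * n%:R) = S k.
  move: E2 e2; generalize (S k) => Sk E2 e2'.
  have -> : t * (e * u2 * n%:R) + (1 - t) * (e * v2 * n%:R) =
    e * n%:R * (t * u2 + (1 - t) * v2) by ring.
  rewrite -E2.
  have -> : e * n%:R * (e * Sk / n%:R) = (e * e) * Sk by field; exact: lt0r_neq0.
  by rewrite e2' mul1r.
have E1' : t * (n%:R * u1) + (1 - t) * (n%:R * v1) = k%:R.
  have -> : t * (n%:R * u1) + (1 - t) * (n%:R * v1) = n%:R * (t * u1 + (1 - t) * v1) by ring.
  by rewrite -E1; field; exact: lt0r_neq0.
suff [U1 [V1 [U2 V2]]] : n%:R * u1 = k%:R /\ n%:R * v1 = k%:R /\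
    e * u2 * n%:R = S k /\ e * v2 * n%:R = S k.
  have fin : forall x y : R, n%:R * x = k%:R -> e * y * n%:R = S k ->
      (x, y) = (k%:R / n%:R, e * S k / n%:R).
    move=> x y X Y; congr (_, _).
      by rewrite -X; field; exact: lt0r_neq0.
    rewrite -Y; have -> : e * (e * y * n%:R) / n%:R = (e * e) * y by field; exact: lt0r_neq0.
    by rewrite e2 mul1r.
  by split; apply: fin.
have ltk := ltn_ord k.
case: (posnP k) => [k0|kp].
  have kR : (k%:R : R) = 0 by rewrite k0.
  rewrite kR in E1'.
  have nu : - (n%:R * u1) <= 0 by rewrite oppr_le0; apply: mulr_ge0 => //; exact: ltW.
  have nv : - (n%:R * v1) <= 0 by rewrite oppr_le0; apply: mulr_ge0 => //; exact: ltW.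
  have [u0' v0'] := extreme_aux _ _ _ _ _ t0 t1 nu nv ltac:(lra).
  have u0 : n%:R * u1 = 0 by lra.
  have v0 : n%:R * v1 = 0 by lra.
  have Hu0 := Hu 0%N hn; have Hv0 := Hv 0%N hn.
  rewrite u0 /= in Hu0; rewrite v0 /= in Hv0.
  rewrite (@S0 R n) subrr mulr0 addr0 in Hu0 Hv0.
  have -> : u2 = 0 by apply/eqP; rewrite -normr_le0; have := normr_ge0 u2; nra.
  have -> : v2 = 0 by apply/eqP; rewrite -normr_le0; have := normr_ge0 v2; nra.
  by rewrite kR k0 (@S0 R n) !mulr0 mul0r.
case: (ltnP k n) => kn.
  pose j := k.-1.
  have jk : (k : nat) = j.+1 by rewrite prednK.
  have jn : (j < n)%N by lia.
  have jlt : (j < k)%N by lia.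
  have cjk := @cv_strict R n hn j k jlt kn.
  have Sj : S k = S j + c j by rewrite /cv -jk; ring.
  have L1a := eu j jn; have L1b := ev j jn.
  have L2a := eu k kn; have L2b := ev k kn.
  have jR : (k%:R : R) = j%:R + 1 by rewrite jk -natr1.
  have [A1 B1] := extreme_aux _ _ _ _ _ t0 t1 L1a L1b ltac:(rewrite E2' (aff _ _ _ _ _ _ _ E1') jR Sj; ring).
  have [A2 B2] := extreme_aux _ _ _ _ _ t0 t1 L2a L2b ltac:(rewrite E2' (aff _ _ _ _ _ _ _ E1'); ring).
  have cne : c j - c k != 0 by rewrite subr_eq0; apply/eqP => E; move: cjk; rewrite E ltxx.
  have U1 : n%:R * u1 = k%:R.
    have : (c j - c k) * (n%:R * u1 - k%:R) = 0 by nra.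
    by move/eqP; rewrite mulf_eq0 (negbTE cne) /= subr_eq0 => /eqP.
  have V1 : n%:R * v1 = k%:R.
    have : (c j - c k) * (n%:R * v1 - k%:R) = 0 by nra.
    by move/eqP; rewrite mulf_eq0 (negbTE cne) /= subr_eq0 => /eqP.
  split => //; split => //; split.
    by rewrite A2 U1 subrr mulr0 addr0.
  by rewrite B2 V1 subrr mulr0 addr0.
have kn' : k = n :> nat by lia.
have kR : (k%:R : R) = n%:R by rewrite kn'.
have U1 : n%:R * u1 = k%:R.
  have [-> _] := extreme_aux _ _ _ _ _ t0 t1 u11 v11 ltac:(rewrite -(mulr1 n%:R) in E1'; nra).
  by rewrite mulr1 kR.
have V1 : n%:R * v1 = k%:R.
  have [_ ->] := extreme_aux _ _ _ _ _ t0 t1 u11 v11 ltac:(rewrite -(mulr1 n%:R) in E1'; nra).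
  by rewrite mulr1 kR.
pose j := n.-1.
have jn : (j < n)%N by rewrite /j prednK.
have Sn : S k = S j + c j * (n%:R - j%:R).
  rewrite /cv kn' /j prednK // -[X in X%:R - _](prednK hn) -natr1; ring.
have L1a := eu j jn; have L1b := ev j jn.
rewrite U1 kR -Sn in L1a; rewrite V1 kR -Sn in L1b.
have [A B] := extreme_aux _ _ _ _ _ t0 t1 L1a L1b ltac:(rewrite E2'; ring).
by split => //; split.
Qed.
End PartD.

Theorem mainTheorem7 (R : realType) (n : nat) (hn : (0 < n)%N) :
  @attainable R n = @polygon R n /\
  (forall (k : 'I_n.+1) (s : bool), extreme_point (@attainable R n) (@vertex R n k s)).
Proof.
split; first exact: att_eq.
move=> k s; exact: extreme_vertex.
Qed.
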